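(* Let $A=\{1,\dots,k\}$ and $M\le A^A$ a monoid. If a binary operation $h:A^2\to A$ satisfies $h\in(\overline{M})^{*}$, in particular if $h\in M^{*}$, then the unary map $x\mapsto h(x,x)$ belongs to $\overline{M}$.
   Context: A translation of a binary $h$ is a unary map $x\mapsto h(a,x)$ or $x\mapsto h(x,a)$ for some fixed $a\in A$; more generally for $n$-ary $f$ translations are $x\mapsto f(a_1,\dots,a_{i-1},x,a_{i+1},\dots,a_n)$; $\mathrm{trl}(f)$ is the set of translations ($\{f\}$ for unary $f$), and $N^*:=\{f\mid\mathrm{trl}(f)\subseteq N\}$ for $N\subseteq A^A$. The u-closure $\overline M$ is the intersection of all monoids $N$ with $M\subseteq N\le A^A$ such that $N^*$ is a clone. *)

(* Defs.v *)
(* The base set A = {1,...,k} is modelled by 'I_k = {0,...,k-1}. *)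
From mathcomp Require Import all_boot.
Set Implicit Arguments. Unset Strict Implicit. Unset Printing Implicit Defensive.

Definition op (k n : nat) := {ffun {ffun 'I_n -> 'I_k} -> 'I_k}.

Definition umap (k : nat) := {ffun 'I_k -> 'I_k}.

Definition is_monoid k (N : umap k -> Prop) : Prop :=
  N [ffun x => x] /\ forall f g, N f -> N g -> N [ffun x => f (g x)].

Definition transl k n (f : op k n) (i : 'I_n) (a : {ffun 'I_n -> 'I_k}) : umap k :=
  [ffun x => f [ffun j => if j == i then x else a j]].

Definition Fstar k (N : umap k -> Prop) (n : nat) (f : op k n) : Prop :=
  (0 < n) /\ forall i a, N (transl f i a).

Definition is_clone k (C : forall n, op k n -> Prop) : Prop :=
  (forall n (f : op k n), C n f -> 0 < n) /\
  (forall n (i : 'I_n), C n [ffun x : {ffun 'I_n -> 'I_k} => x i]) /\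
  (forall n m (f : op k n) (g : 'I_n -> op k m), 0 < m ->
     C n f -> (forall i, C m (g i)) ->
     C m [ffun x : {ffun 'I_m -> 'I_k} => f [ffun i => g i x]]).

Definition ubar k (M : umap k -> Prop) : umap k -> Prop :=
  fun g => forall N : umap k -> Prop,
    is_monoid N -> (forall f, M f -> N f) -> is_clone (Fstar N) -> N g.

Definition diag k (h : op k 2) : umap k := [ffun x => h [ffun _ => x]].

(* Main.v *)
Require Import Defs.
From mathcomp Require Import all_boot.

Theorem corollary3p10 (k : nat) (M : umap k -> Prop) (h : op k 2) :
  is_monoid M ->
  (Fstar (ubar M) h \/ Fstar M h) ->
  ubar M (diag h).
Proof.
move=> _ Hh N HN HMN [Cpos [Cproj Ccomp]].
have HhN : Fstar N h.
  case: Hh => [[H0 H]|[H0 H]]; split => // i a.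
    by apply: (H i a N HN HMN); split.
  by apply: HMN.
have := Ccomp 2 1 h (fun _ => [ffun x : {ffun 'I_1 -> 'I_k} => x ord0]) isT HhN
  (fun _ => Cproj 1 ord0).
case: k M h Hh N HN HMN Cpos Cproj Ccomp HhN => [|k] M h Hh N HN HMN Cpos Cproj Ccomp HhN.
  move=> _; have -> : diag h = [ffun x => x] by apply/ffunP => -[].
  exact: HN.1.
case=> _ /(_ ord0 [ffun=> ord0]).
congr N; apply/ffunP => y; rewrite /transl /diag !ffunE; congr (h _).
Qed.
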